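(* Let $p$ be an odd prime and $k\in\{1,2,\ldots,(p-1)/2\}$. Then $$\binom{\frac{p-1}2+k}{2k}\equiv\frac{\binom{2k}k}{(-16)^k}\Big(1-p^2\sum_{i=1}^k\frac1{(2i-1)^2}\Big)\pmod{p^4}.$$
   Context: Congruences are between rational numbers whose denominators are prime to $p$. *)

(* Defs.v *)
From HB Require Import structures.
From mathcomp Require Import all_boot all_order all_algebra.
Set Implicit Arguments. Unset Strict Implicit. Unset Printing Implicit Defensive.
Import Order.TTheory GRing.Theory Num.Theory.
Local Open Scope ring_scope.

Definition rat_cong_mod (p n : nat) (x y : rat) : Prop :=
  exists (a b : int), ~~ (p%:Z %| b)%Z /\ x - y = (p ^ n)%:R * a%:~R / b%:~R.

(* Main.v *)
Require Import Defs.
From HB Require Import structures.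
From mathcomp Require Import all_boot all_order all_algebra.
From mathcomp Require Import ring lra zify.
Import Order.TTheory GRing.Theory Num.Theory.
Set Implicit Arguments. Unset Strict Implicit. Unset Printing Implicit Defensive.
Local Open Scope ring_scope.

Definition pint (p : nat) (x : rat) :=
  exists a b : int, ~~ (p%:Z %| b)%Z /\ x = a%:~R / b%:~R.

Lemma ndvd_nz p b : ~~ (p%:Z %| b)%Z -> b%:~R != 0 :> rat.
Proof. move=> h; rewrite intr_eq0; apply: contra h => /eqP->; exact: dvdz0. Qed.

Lemma ndvdM p b1 b2 : prime p -> ~~ (p%:Z %| b1)%Z -> ~~ (p%:Z %| b2)%Z ->
  ~~ (p%:Z %| b1 * b2)%Z.
Proof.
move=> pp; rewrite !dvdzE abszM Euclid_dvdM //.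
by move=> /negPf-> /negPf->.
Qed.

Lemma pintM p x y : prime p -> pint p x -> pint p y -> pint p (x * y).
Proof.
move=> pp [a1 [b1 [h1 ->]]] [a2 [b2 [h2 ->]]].
exists (a1 * a2), (b1 * b2); split; first exact: ndvdM.
by rewrite !intrM invfM mulrACA.
Qed.

Lemma pintD p x y : prime p -> pint p x -> pint p y -> pint p (x + y).
Proof.
move=> pp [a1 [b1 [h1 ->]]] [a2 [b2 [h2 ->]]].
exists (a1 * b2 + a2 * b1), (b1 * b2); split; first exact: ndvdM.
have n1 := ndvd_nz h1; have n2 := ndvd_nz h2.
rewrite intrD !intrM; field.
by rewrite n1 n2.
Qed.

Lemma pintN p x : pint p x -> pint p (- x).
Proof.
move=> [a [b [h ->]]]; exists (- a), b; split => //.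
by rewrite intrN mulNr.
Qed.

Lemma pint_nat p n : prime p -> pint p n%:R.
Proof.
move=> pp; exists n%:Z, 1; split; last by rewrite divr1.
rewrite dvdzE /= dvdn1; by case: eqP pp => // ->.
Qed.

Lemma pint_sum p (x : nat -> rat) k : prime p ->
  (forall i, (1 <= i <= k)%N -> pint p (x i)) ->
  pint p (\sum_(1 <= i < k.+1) x i).
Proof.
move=> pp hx; rewrite big_nat_cond; apply: big_ind.
- exact: (pint_nat 0 pp).
- by move=> ? ?; apply: pintD.
- by move=> i /andP[/andP[h1 h2] _]; apply: hx; rewrite h1.
Qed.

Lemma prod_cong p (q : rat) (x : nat -> rat) k : prime p -> pint p q ->
  (forall i, (1 <= i <= k)%N -> pint p (x i)) ->
  exists R, pint p R /\ \prod_(1 <= i < k.+1) (1 - q * x i)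
     = 1 - q * \sum_(1 <= i < k.+1) x i + q ^+ 2 * R.
Proof.
move=> pp hq; elim: k => [|k IH] hx.
  exists 0; split; first exact: (pint_nat 0 pp).
  by rewrite !big_geq // mulr0 subr0 mulr0 addr0.
have [|R [hR e]] := IH.
  by move=> i /andP[h1 h2]; apply: hx; rewrite h1 (leq_trans h2).
have hxk : pint p (x k.+1) by apply: hx; rewrite /= leqnn.
have hS : pint p (\sum_(1 <= i < k.+1) x i).
  by apply: pint_sum => // i /andP[h1 h2]; apply: hx; rewrite h1 (leq_trans h2).
exists ((\sum_(1 <= i < k.+1) x i) * x k.+1 + R * (1 - q * x k.+1)); split.
  apply: (pintD pp (pintM pp hS hxk) (pintM pp hR _)).
  exact: (pintD pp (pint_nat 1 pp) (pintN (pintM pp hq hxk))).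
rewrite (big_nat_recr k.+1) // (big_nat_recr k.+1) //= e; ring.
Qed.

Lemma cbin m : ('C(m + m, m))%:R = ((m + m)`!)%:R / (m`!)%:R ^+ 2 :> rat.
Proof.
have H := bin_fact (leq_addr m m); rewrite addnK in H.
have nz : (m`!)%:R != 0 :> rat by rewrite pnatr_eq0 -lt0n fact_gt0.
rewrite -H !natrM; field; by rewrite nz.
Qed.

Lemma binrec m j : ('C(m.+1, j.+2))%:R * (j.+2)%:R * (j.+1)%:R
   = (m.+1)%:R * (m - j)%:R * ('C(m, j))%:R :> rat.
Proof.
have h1 := mul_bin_diag m.+1 j.+1; have h2 := mul_bin_left m j.
rewrite /= in h1.
have : ('C(m.+1, j.+2) * j.+2 * j.+1 = m.+1 * (m - j) * 'C(m, j))%N.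
  rewrite (mulnC _ j.+2) -h1 -mulnA (mulnC 'C(m, j.+1)) h2 mulnA //.
by move/(congr1 (fun x => x%:R : rat)); rewrite !natrM.
Qed.

Ltac nzs := repeat (apply/andP; split); first [assumption | apply/lt0r_neq0; lra].

Lemma binid (n k : nat) : (k <= n)%N ->
  ('C(n + k, 2 * k))%:R = ('C(2 * k, k))%:R / ((-16) ^+ k) *
    \prod_(1 <= i < k.+1) (1 - (((n.*2.+1) ^ 2)%:R : rat) * (1 / ((2 * i - 1) ^ 2)%:R)).
Proof.
elim: k => [|k IH] hk.
  by rewrite muln0 addn0 !bin0 expr0 big_geq // divr1 mulr1.
have [d hd] : exists d, n = (k.+1 + d)%N by exists (n - k.+1)%N; rewrite subnKC.
rewrite big_nat_recr //=.
set X := \prod_(1 <= i < k.+1) _.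
have Cnz : ('C(2 * k, k))%:R != 0 :> rat by rewrite pnatr_eq0 -lt0n bin_gt0; lia.
have snz : ((-16) ^+ k) != 0 :> rat by rewrite expf_neq0 // oppr_eq0.
have eX : X = ('C(n + k, 2 * k))%:R * (-16) ^+ k / ('C(2 * k, k))%:R.
  rewrite IH ?(ltnW hk) // /X; field; by rewrite Cnz snz.
rewrite eX.
have B := binrec (n + k) (2 * k).
rewrite (_ : (n + k - 2 * k = d.+1)%N) in B; last by lia.
rewrite (_ : (2 * k.+1 - 1 = (2 * k).+1)%N); last by lia.
rewrite (_ : (n + k.+1 = (n + k).+1)%N); last by lia.
have e2 : (2 * k.+1 = (2 * k).+2)%N by lia.
rewrite {1}e2.
have -> : ('C((n + k).+1, (2 * k).+2))%:R = ((n + k).+1)%:R * (d.+1)%:R * ('C(n + k, 2 * k))%:R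
     / (((2 * k).+2)%:R * ((2 * k).+1)%:R) :> rat.
  have k0 : 0 <= k%:R :> rat by apply: ler0n.
  rewrite -B; field; nzs.
rewrite (_ : (2 * k.+1 = k.+1 + k.+1)%N); last by lia.
rewrite (_ : (2 * k = k + k)%N); last by lia.
rewrite !cbin.
rewrite (_ : (k.+1 + k.+1 = (k + k).+2)%N); last by lia.
rewrite !factS hd.
rewrite (exprS _ k).
rewrite (_ : ((k.+1 + d).*2.+1 = 2*k + 2*d + 3)%N); last by lia.
rewrite (_ : ((k + k).+2 = k + k + 2)%N); last by lia.
rewrite (_ : ((k + k).+1 = k + k + 1)%N); last by lia.
rewrite (_ : ((k.+1 + d + k).+1 = k + d + k + 2)%N); last by lia.
rewrite (_ : (d.+1 = d + 1)%N); last by lia.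
rewrite (_ : (k.+1 = k + 1)%N); last by lia.
rewrite !(natrM, natrD, natrX, exprS, expr0).
have k0 : 0 <= k%:R :> rat by apply: ler0n.
have d0 : 0 <= d%:R :> rat by apply: ler0n.
have f0 : 0 < (k`!)%:R :> rat by rewrite ltr0n fact_gt0.
have s0 : (-16) ^+ k != 0 :> rat by [].
clear eX X IH B.
have f1 : 0 < ((k + k)`!)%:R :> rat by rewrite ltr0n fact_gt0.
field; nzs.
Qed.

Theorem lemma2p2 (p k : nat) :
  prime p -> odd p -> (1 <= k)%N -> (k <= (p - 1) %/ 2)%N ->
  rat_cong_mod p 4
    ('C((p - 1) %/ 2 + k, 2 * k))%:R
    (('C(2 * k, k))%:R / ((-16) ^+ k)
       * (1 - (p ^ 2)%:R * \sum_(1 <= i < k.+1) 1 / ((2 * i - 1) ^ 2)%:R)).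
Proof.
move=> pp op k1 kn.
have hp : p = ((p - 1) %/ 2).*2.+1.
  have e := odd_double_half p; rewrite op /= in e.
  rewrite -divn2 -muln2 in e; rewrite -muln2; lia.
rewrite binid //; rewrite -hp.
have [|R [hR ->]] := @prod_cong p (p ^ 2)%:R (fun i => 1 / ((2 * i - 1) ^ 2)%:R) k pp
   (pint_nat _ pp).
  move=> i /andP[i1 ik].
  exists 1, ((2 * i - 1) ^ 2)%:Z; split; last by [].
  rewrite dvdzE /= -prime_coprime //; apply: coprimeXr.
  rewrite prime_coprime //; apply/negP => /dvdn_leq h.
  have : (0 < 2 * i - 1)%N by lia.
  move/h; lia.
set c := _ / _.
have hc : pint p c.
  exists ('C(2 * k, k))%:Z, ((-16) ^+ k); split.
    rewrite dvdzE abszX /= -prime_coprime //; apply: coprimeXr.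
    rewrite (_ : 16%N = 2 ^ 4)%N //; apply: coprimeXr.
    rewrite prime_coprime // dvdn_prime2 //.
    by apply/eqP => p2; rewrite p2 in op.
  by rewrite /c rmorphXn /= rmorphN.
have [a [b [hb e]]] := pintM pp hc hR.
exists a, b; split => //.
rewrite -mulrA -e /c !natrX; ring.
Qed.
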